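(* For finite groups $G$ and $H$, $P_e(G)\cong P_e(H)$ if and only if $C(G)\cong C(H)$ and $|G|=|H|$.
   Context: All groups are finite. For a group $X$, the enhanced power graph $P_e(X)$ is the simple graph with vertex set $X$ in which two distinct vertices $x,y$ are adjacent if and only if $\langle x,y\rangle$ is cyclic. Let $\mathrm{Cyc}(X)=\{x\in X : \langle x,y\rangle \text{ is cyclic for all } y\in X\}$. The cyclic graph $C(X)$ is the induced subgraph of $P_e(X)$ on the vertex set $X\setminus \mathrm{Cyc}(X)$, i.e. two vertices $x,y\in X\setminus\mathrm{Cyc}(X)$ are adjacent iff $\langle x,y\rangle$ is cyclic. *)

(* Defs.v *)
From mathcomp Require Import all_boot all_fingroup all_solvable.
Set Implicit Arguments. Unset Strict Implicit. Unset Printing Implicit Defensive.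
Local Open Scope group_scope.

(* A finite group is represented by a finGroupType gT, the group being [set: gT]. *)

Definition epg_adj (gT : finGroupType) (x y : gT) : bool :=
  (x != y) && cyclic <<[set x; y]>>.

Definition Cyc (gT : finGroupType) : {set gT} :=
  [set x : gT | [forall y : gT, cyclic <<[set x; y]>>]].

Definition induced_graph_iso (T U : finType) (eT : rel T) (eU : rel U)
    (A : {set T}) (B : {set U}) : Prop :=
  exists f : T -> U,
    [/\ {in A &, injective f}, f @: A = B &
        {in A &, forall x y, eT x y = eU (f x) (f y)}].

Definition Pe_iso (gT hT : finGroupType) : Prop :=
  induced_graph_iso (@epg_adj gT) (@epg_adj hT) [set: gT] [set: hT].

(* C(G) ≅ C(H): cyclic graph = induced subgraph of P_e on X \ Cyc(X) *)
Definition cyc_graph_iso (gT hT : finGroupType) : Prop :=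
  induced_graph_iso (@epg_adj gT) (@epg_adj hT) (~: Cyc gT) (~: Cyc hT).

(* Main.v *)
Require Import Defs.
From mathcomp Require Import all_boot all_fingroup all_solvable.
Set Implicit Arguments. Unset Strict Implicit. Unset Printing Implicit Defensive.
Local Open Scope group_scope.

Lemma adj_sym (gT : finGroupType) (x y : gT) : epg_adj x y = epg_adj y x.
Proof. by rewrite /epg_adj eq_sym setUC. Qed.

Lemma adjCl (gT : finGroupType) (x y : gT) :
  x \in Cyc gT -> epg_adj x y = (x != y).
Proof.
by rewrite inE => /forallP H; rewrite /epg_adj H andbT.
Qed.

Lemma adjCr (gT : finGroupType) (x y : gT) :
  y \in Cyc gT -> epg_adj x y = (x != y).
Proof. by move=> Hy; rewrite adj_sym adjCl // eq_sym. Qed.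

Lemma CycE (gT : finGroupType) (x : gT) :
  (x \in Cyc gT) = [forall y, (y != x) ==> epg_adj x y].
Proof.
apply/idP/idP.
  by move=> Hx; apply/forallP => y; apply/implyP => Hy; rewrite adjCl // eq_sym.
move/forallP => H; rewrite inE; apply/forallP => y.
case: (eqVneq y x) => [->|Hyx].
  by rewrite setUid; exact: (cycle_cyclic x).
by have := implyP (H y) Hyx; case/andP.
Qed.

Theorem lemma2 (gT hT : finGroupType) :
  Pe_iso gT hT <-> cyc_graph_iso gT hT /\ #|gT| = #|hT|.
Proof.
split.
  case=> f [finj fim fadj].
  have fe : forall a b, (f a == f b) = (a == b).
    by move=> a b; apply/eqP/eqP => [/finj|->] //; apply; rewrite inE.
  have fsurj : forall z, exists x, z = f x.
    move=> z; have : z \in f @: [set: gT] by rewrite fim inE.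
    by case/imsetP => x _ ->; exists x.
  have fC : forall x, (f x \in Cyc hT) = (x \in Cyc gT).
    move=> x; rewrite !CycE; apply/forallP/forallP => H y.
      have := H (f y); rewrite fe fadj ?inE //.
    have [y' ->] := fsurj y; rewrite fe -fadj ?inE //; exact: H.
  split.
    exists f; split.
    - by move=> a b _ _; apply: finj; rewrite inE.
    - apply/setP => z; have [x ->] := fsurj z.
      rewrite inE fC; apply/imsetP/idP => [[x' Hx' /eqP]|Hx].
        by rewrite fe => /eqP ->; rewrite inE in Hx'.
      by exists x; rewrite // inE.
    - by move=> a b _ _; apply: fadj; rewrite inE.
  by rewrite -!cardsT -fim card_in_imset // => a b _ _; apply: finj; rewrite inE.
case=> [[f [finj fim fadj]] Hcard].
have cC : #|Cyc gT| = #|Cyc hT|.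
  have e1 : #|~: Cyc gT| = #|~: Cyc hT| by rewrite -fim (card_in_imset finj).
  have a1 := cardsC (Cyc gT); have a2 := cardsC (Cyc hT).
  by apply/eqP; rewrite -(eqn_add2r #|~: Cyc gT|) a1 e1 a2 Hcard.
pose g x := nth 1 (enum (Cyc hT)) (index x (enum (Cyc gT))).
have gC : forall x, x \in Cyc gT -> g x \in Cyc hT.
  move=> x Hx; rewrite -mem_enum /g mem_nth // -cardE -cC cardE index_mem mem_enum //.
have ginj : {in Cyc gT &, injective g}.
  move=> a b Ha Hb /eqP; rewrite /g nth_uniq ?enum_uniq //; last first.
  - by rewrite -cardE -cC cardE index_mem mem_enum.
  - by rewrite -cardE -cC cardE index_mem mem_enum.
  move=> /eqP /(congr1 (nth 1 (enum (Cyc gT)))).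
  by rewrite !nth_index ?mem_enum.
pose h x := if x \in Cyc gT then g x else f x.
have hC : forall x, (h x \in Cyc hT) = (x \in Cyc gT).
  move=> x; rewrite /h; case: ifP => Hx; first by rewrite gC.
  apply/negbTE; rewrite -in_setC -fim; apply: imset_f; by rewrite inE Hx.
have hinj : injective h.
  move=> a b Hab; have := hC a; rewrite Hab hC.
  rewrite /h in Hab; case: ifP Hab => Ha; case: ifP => Hb // Hab _.
    exact: ginj.
  by apply: finj; rewrite // inE ?Ha ?Hb.
have he : forall a b, (h a == h b) = (a == b).
  by move=> a b; apply/eqP/eqP => [/hinj|->].
exists h; split.
- by move=> a b _ _; apply: hinj.
- by apply/eqP; rewrite eqEcard subsetT cardsT -Hcard card_imset // cardsT leqnn.
- move=> a b _ _.
  case Ha: (a \in Cyc gT).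
    by rewrite !adjCl ?hC // he.
  case Hb: (b \in Cyc gT).
    by rewrite !adjCr ?hC // he.
  by rewrite /h Ha Hb fadj // inE ?Ha ?Hb.
Qed.
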